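(* Let $d\ge1$, $\varepsilon>0$, and tensors $T^{(0)}\in\mathbb C$, $T^{(j)}\in(\mathbb{C}^n)^{\otimes 2j}$ ($j\in[d]$) with $\|T^{(j)}\|_F\le1$ for all $j$. For $j\in[d]$ and $i\in[2j]$ let $M_{j,i}\in\mathbb{C}^{n\times n^{2j-1}}$ be the flattening of $T^{(j)}$ whose row index is the $i$-th tensor index, let $W_{j,i}\subseteq\mathbb{C}^n$ be the span of the left singular vectors of $M_{j,i}$ with singular value at least $\varepsilon/(d+1)^2$, and let $W$ be the span of all $W_{j,i}$ and their entrywise complex conjugates $W_{j,i}^*$ ($j\in[d]$, $i\in[2j]$). Then $\dim W\le 8(d+1)^6/\varepsilon^2$, and for every $\vec y\in\mathbb{C}^n$ with $\|\vec y\|_2\le1$, \[ |f(\vec y)-f(\Pi_W\vec y)|\le\varepsilon, \] where $\Pi_W$ is the orthogonal projection onto $W$ and $f(\vec x)=T^{(0)}+\sum_{j=1}^d\langle T^{(j)},(\vec x^* )^{\otimes j}\otimes\vec x^{\otimes j}\rangle$.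
   Context: $\vec x^*$ is the entrywise complex conjugate. For tensors of the same shape, $\langle A,B\rangle=\sum_{\text{indices}}A_{i_1\dots i_k}B_{i_1\dots i_k}$ (bilinear, no conjugation). $\|\cdot\|_F$ is the Frobenius norm (square root of the sum of squared magnitudes of entries). *)

(* Defs.v *)
From HB Require Import structures.
From mathcomp Require Import all_boot all_order all_algebra.
From mathcomp Require Import reals.
From mathcomp Require Import complex.
Set Implicit Arguments. Unset Strict Implicit. Unset Printing Implicit Defensive.
Import Order.TTheory GRing.Theory Num.Theory.
Local Open Scope ring_scope.

Section Defs.
Variable C : numClosedFieldType.
Variable n : nat.

Definition tensor (k : nat) := {ffun 'I_k -> 'I_n} -> C.

Definition frob k (T : tensor k) : C := sqrtC (\sum_(idx : {ffun 'I_k -> 'I_n}) `|T idx| ^+ 2).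

Definition vnorm (x : 'rV[C]_n) : C := sqrtC (\sum_(a < n) `|x 0 a| ^+ 2).

Definition rest_idx k (i : 'I_k) := {ffun {l : 'I_k | l != i} -> 'I_n}.

Definition insert_idx k (i : 'I_k) (a : 'I_n) (c : rest_idx i) : {ffun 'I_k -> 'I_n} :=
  [ffun l => oapp c a (insub l : option {l0 : 'I_k | l0 != i})].

Definition flattening k (T : tensor k) (i : 'I_k) : 'M[C]_(n, #|{: rest_idx i}|) :=
  \matrix_(a < n, c < #|{: rest_idx i}|) T (insert_idx a (enum_val c)).

(* Row-vector convention: a column vector u satisfies (M M^H) u = s u iff the row
   vector u^T satisfies u^T *m gramT M = s u^T, where gramT M = (M M^H)^T. *)
Definition gramT m (M : 'M[C]_(n, m)) : 'M[C]_n := map_mx Num.conj M *m M^T.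

(* Left singular vectors of M (as row vectors): an orthonormal eigenbasis of M M^H,
   namely the rows of the unitary spectral matrix of gramT M; the k-th one has
   singular value sqrtC (spectral_diag (gramT M) 0 k).  left_sv_space M tau is the
   span of those with singular value >= tau. *)
Definition left_sv_space m (M : 'M[C]_(n, m)) (tau : C) : 'M[C]_n :=
  (\sum_(k < n | (tau <= sqrtC (spectral_diag (gramT M) 0 k))%R)
      <<row k (spectralmx (gramT M))>>)%MS.

Definition conj_space (U : 'M[C]_n) : 'M[C]_n := map_mx Num.conj U.

Definition Wspace (T : forall j : nat, tensor (2 * j)) (d : nat) (tau : C) : 'M[C]_n :=
  (\sum_(j < d.+1 | (1 <= j)%N) \sum_(i < 2 * j)
      (left_sv_space (flattening (T j) i) tau
       + conj_space (left_sv_space (flattening (T j) i) tau)))%MS.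

(* <T, (x^* )^{(x) j} (x) x^{(x) j}>  (bilinear pairing, no conjugation). *)
Definition pairing j (T : tensor (2 * j)) (x : 'rV[C]_n) : C :=
  \sum_(idx : {ffun 'I_(2 * j) -> 'I_n})
     T idx * \prod_(l < 2 * j) (if (l < j)%N then (x 0 (idx l))^* else x 0 (idx l)).

Definition fpoly (T0 : C) (T : forall j : nat, tensor (2 * j)) (d : nat) (x : 'rV[C]_n) : C :=
  T0 + \sum_(j < d.+1 | (1 <= j)%N) pairing (T j) x.

End Defs.

(* Main.v *)
Require Import Defs.
From HB Require Import structures.
From mathcomp Require Import all_boot all_order all_algebra.
From mathcomp Require Import reals complex.
Set Implicit Arguments. Unset Strict Implicit. Unset Printing Implicit Defensive.
Import Order.TTheory GRing.Theory Num.Theory Num.Def.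
Local Open Scope ring_scope.
Local Open Scope sesquilinear_scope.

Section Reindex.
Variable C : numClosedFieldType.
Variable n k : nat.
Variable i : 'I_k.

Lemma insert_idx_i (a : 'I_n) (r : rest_idx n i) : insert_idx a r i = a.
Proof. by rewrite /insert_idx ffunE insubF ?eqxx. Qed.

Lemma insert_idx_l (a : 'I_n) (r : rest_idx n i) (l : {l : 'I_k | l != i}) :
  insert_idx a r (val l) = r l.
Proof. by rewrite /insert_idx ffunE valK. Qed.

Definition rest_of (idx : {ffun 'I_k -> 'I_n}) : rest_idx n i :=
  [ffun l => idx (val l)].

Lemma insert_rest (idx : {ffun 'I_k -> 'I_n}) : insert_idx (idx i) (rest_of idx) = idx.
Proof.
apply/ffunP => l; rewrite /insert_idx ffunE.
case: (boolP (l == i)) => [/eqP->|Hl]; first by rewrite insubF ?eqxx.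
by rewrite (insubT (fun l0 => l0 != i) Hl) /= /rest_of ffunE.
Qed.

Lemma rest_insert a (r : rest_idx n i) : rest_of (insert_idx a r) = r.
Proof. by apply/ffunP => l; rewrite /rest_of ffunE insert_idx_l. Qed.

Lemma sum_idx_split (F : {ffun 'I_k -> 'I_n} -> C) :
  \sum_(idx : {ffun 'I_k -> 'I_n}) F idx = \sum_(a : 'I_n) \sum_(r : rest_idx n i) F (insert_idx a r).
Proof.
rewrite pair_big /=.
rewrite (reindex (fun p : 'I_n * rest_idx n i => insert_idx p.1 p.2)) //=.
exists (fun idx : {ffun 'I_k -> 'I_n} => (idx i, rest_of idx)) => [[a r] _|idx _] /=.
  by rewrite insert_idx_i rest_insert.
by rewrite insert_rest.
Qed.

Lemma prod_split (F : 'I_k -> C) :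
  \prod_l F l = F i * \prod_(l : {l : 'I_k | l != i}) F (val l).
Proof.
rewrite (bigD1 i) //=; congr (_ * _).
by rewrite (big_sub (fun l : 'I_k => l != i)).
Qed.

Lemma sum_rest_enum (F : rest_idx n i -> C) :
  \sum_(r : rest_idx n i) F r = \sum_(c < #|{: rest_idx n i}|) F (enum_val c).
Proof.
rewrite (reindex (@enum_val _ (mem {: rest_idx n i}))) //=.
exists enum_rank => c _; [exact: enum_valK | exact: enum_rankK].
Qed.

End Reindex.
Section Norms.
Variable C : numClosedFieldType.

Lemma sqrtC_le1 (x : C) : 0 <= x -> sqrtC x <= 1 -> x <= 1.
Proof.
move=> x0 h; rewrite -(sqrtCK x) -(expr1n _ 2).
rewrite ler_pXn2r ?nnegrE ?sqrtC_ge0 //.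
Qed.

Lemma amgm (x y : C) : 0 <= x -> 0 <= y -> (x * y) *+ 2 <= x ^+ 2 + y ^+ 2.
Proof.
move=> x0 y0.
have h : 0 <= (x - y) ^+ 2.
  by rewrite -real_normK ?exprn_ge0 // realB // ger0_real.
by rewrite sqrrB addrAC subr_ge0 in h.
Qed.

Lemma CS_bound (I : finType) (a b : I -> C) (tau : C) : 0 < tau ->
  \sum_i `|a i| ^+ 2 <= tau ^+ 2 -> \sum_i `|b i| ^+ 2 <= 1 ->
  `|\sum_i a i * b i| <= tau.
Proof.
move=> t0 ha hb.
apply: (le_trans (ler_norm_sum _ _ _)).
have key : (tau * \sum_i `|a i * b i|) *+ 2 <= (tau * tau) *+ 2.
  rewrite mulr_sumr -sumrMnl.
  apply: (le_trans (y := \sum_i (`|a i| ^+ 2 + (tau * `|b i|) ^+ 2))).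
    apply: ler_sum => j _; rewrite normrM mulrCA.
    by apply: amgm; rewrite ?mulr_ge0 // ltW.
  rewrite big_split /= mulr2n lerD //.
  under eq_bigr do rewrite exprMn.
  rewrite -mulr_sumr -expr2 -[X in _ <= X](mulr1 (tau ^+ 2)).
  by rewrite ler_wpM2l // exprn_ge0 // ltW.
rewrite lerMn2r /= in key.
by rewrite -(ler_pM2l t0).
Qed.

Lemma sum_prod_norm (J : finType) (n : nat) (V : J -> 'I_n -> C) :
  \sum_(r : {ffun J -> 'I_n}) `|\prod_l V l (r l)| ^+ 2 =
  \prod_l \sum_a `|V l a| ^+ 2.
Proof.
rewrite bigA_distr_bigA /=; apply: eq_bigr => r _.
by rewrite normr_prod -prodrXl.
Qed.

End Norms.

Lemma telescope_prod (R : comPzRingType) k (a b : 'I_k -> R) :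
  \prod_l a l - \prod_l b l =
  \sum_(m < k) \prod_(l < k)
     (if (l < m)%N then b l else if l == m then a l - b l else a l).
Proof.
pose P := fun m : nat => \prod_(l < k) (if (l < m)%N then b l else a l).
have P0 : P 0%N = \prod_l a l by [].
have Pk : P k = \prod_l b l by apply: eq_bigr => l _; rewrite ltn_ord.
rewrite -P0 -Pk.
have -> : P 0%N - P k = \sum_(m < k) (P m - P m.+1).
  rewrite -(big_mkord xpredT (fun m => P m - P m.+1)).
  rewrite -opprB -(telescope_sumr _ (leq0n k)) -sumrN.
  by apply: eq_bigr => m _; rewrite opprB.
apply: eq_bigr => m _; rewrite /P (bigD1 m) //= [in X in _ - X](bigD1 m) //=.
rewrite [in RHS](bigD1 m) //= ltnn ltnSn eqxx.
have E1 : \prod_(i < k | i != m) (if (i < m.+1)%N then b i else a i) =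
          \prod_(i < k | i != m) (if (i < m)%N then b i else a i).
  apply: eq_bigr => l hl; rewrite ltnS leq_eqVlt.
  by have -> : (val l == val m) = false by apply/negbTE.
have E2 : \prod_(i < k | i != m)
     (if (i < m)%N then b i else if i == m then a i - b i else a i) =
          \prod_(i < k | i != m) (if (i < m)%N then b i else a i).
  by apply: eq_bigr => l hl; rewrite (negbTE hl).
by rewrite E1 E2 mulrBl.
Qed.

Section Tensor.
Variable C : numClosedFieldType.
Variable n k : nat.
Variable T : tensor C n k.

Definition nrm2 (x : 'rV[C]_n) := \sum_a `|x 0 a| ^+ 2.

Lemma nrm2_ge0 x : 0 <= nrm2 x.
Proof. by apply: sumr_ge0 => a _; rewrite exprn_ge0. Qed.

Definition Gform (V : 'I_k -> 'rV[C]_n) :=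
  \sum_(idx : {ffun 'I_k -> 'I_n}) T idx * \prod_l V l 0 (idx l).

Definition contr (i : 'I_k) (v : 'rV[C]_n) (r : rest_idx n i) :=
  \sum_a v 0 a * T (insert_idx a r).

Lemma KL (i : 'I_k) (V : 'I_k -> 'rV[C]_n) (tau : C) : 0 < tau ->
  (forall l, l != i -> nrm2 (V l) <= 1) ->
  \sum_r `|@contr i (V i) r| ^+ 2 <= tau ^+ 2 -> `|Gform V| <= tau.
Proof.
move=> t0 hV hc.
rewrite /Gform (sum_idx_split i).
under eq_bigr => a _ do under eq_bigr => r _ do
  rewrite (prod_split i) insert_idx_i.
rewrite exchange_big /=.
under eq_bigr => r _ do under eq_bigr => a _ do
  (rewrite (eq_bigr (fun l => V (val l) 0 (r l))); last by move=> l _; rewrite insert_idx_l).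
have -> : \sum_r \sum_a T (insert_idx a r) * (V i 0 a * \prod_(l : {l : 'I_k | l != i}) V (val l) 0 (r l))
   = \sum_r @contr i (V i) r * \prod_(l : {l : 'I_k | l != i}) V (val l) 0 (r l).
  apply: eq_bigr => r _; rewrite /contr mulr_suml; apply: eq_bigr => a _.
  by rewrite mulrA [T _ * _]mulrC.
apply: CS_bound => //.
rewrite (sum_prod_norm (fun l a => V (val l) 0 a)).
apply: prodr_ile1 => l _; rewrite nrm2_ge0 /=.
by apply: hV; exact: (valP l).
Qed.

End Tensor.
Lemma dot_self (C : numClosedFieldType) m (u : 'rV[C]_m) :
  (u *m u ^t*) 0 0 = \sum_c `|u 0 c| ^+ 2.
Proof. by rewrite mxE; apply: eq_bigr => c _; rewrite !mxE normCK. Qed.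

Section Spec.
Variable C : numClosedFieldType.
Variables n m : nat.
Variable M : 'M[C]_(n, m).

Local Notation G := (gramT M).
Local Notation S := (spectralmx (gramT M)).
Local Notation D := (spectral_diag (gramT M)).

Lemma gram_quad (p : 'rV[C]_n) :
  (p *m G *m p ^t*) 0 0 = \sum_c `|(p *m map_mx conjC M) 0 c| ^+ 2.
Proof.
rewrite -dot_self /gramT mulmxA; congr (fun X => X 0 0).
by rewrite -mulmxA; congr (_ *m _); rewrite trmx_mul map_mxM map_trmx map_mxCK.
Qed.

Lemma gram_herm : G ^t* = G.
Proof. by rewrite /gramT trmx_mul map_mxM trmxK map_trmx map_mxCK. Qed.

Lemma gram_normal : G \is normalmx.
Proof. by apply/normalmxP; rewrite gram_herm. Qed.

Lemma S_unitary : S \is unitarymx.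
Proof. exact: spectral_unitarymx. Qed.

Lemma SSt : S *m S ^t* = 1%:M.
Proof. exact/unitarymxP/S_unitary. Qed.

Lemma StS : S ^t* *m S = 1%:M.
Proof. exact/mulmx1C/SSt. Qed.

Lemma G_decomp : G = S ^t* *m diag_mx D *m S.
Proof.
have /orthomx_spectralP h := gram_normal.
by rewrite {1}h invmx_unitary // S_unitary.
Qed.

Lemma quad_spec (p : 'rV[C]_n) :
  (p *m G *m p ^t*) 0 0 = \sum_k D 0 k * `|(p *m S ^t*) 0 k| ^+ 2.
Proof.
have -> : p *m G *m p ^t* = (p *m S ^t*) *m diag_mx D *m (p *m S ^t*) ^t*.
  by rewrite {1}G_decomp trmx_mul map_mxM trmxCK !mulmxA.
rewrite mxE; apply: eq_bigr => k _.
by rewrite mul_mx_diag !mxE normCK [_ * D 0 k]mulrC mulrA.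
Qed.

Lemma D_ge0 k : 0 <= D 0 k.
Proof.
have h := quad_spec (row k S).
have hr : row k S *m S ^t* = row k 1%:M by rewrite -row_mul SSt.
have e : \sum_l D 0 l * `|(row k (1%:M : 'M[C]_n)) 0 l| ^+ 2 = D 0 k.
  rewrite (bigD1 k) //= big1; last first.
    by move=> l hl; rewrite !mxE eq_sym (negbTE hl) normr0 expr0n /= mulr0.
  by rewrite !mxE eqxx normr1 expr1n mulr1 addr0.
rewrite hr e gram_quad in h.
by rewrite -h sumr_ge0 // => c _; rewrite exprn_ge0.
Qed.

Lemma D_sum : \sum_k D 0 k = \sum_a \sum_c `|M a c| ^+ 2.
Proof.
rewrite -mxtrace_diag.
have -> : diag_mx D = S *m (S ^t* *m diag_mx D *m S) *m S ^t*.
  by rewrite !mulmxA SSt mul1mx -mulmxA SSt mulmx1.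
rewrite -G_decomp.
rewrite mxtrace_mulC mulmxA StS mul1mx /mxtrace.
apply: eq_bigr => a _; rewrite /gramT !mxE; apply: eq_bigr => c _.
by rewrite !mxE normCKC.
Qed.

Lemma count_bound (tau : C) : 0 < tau ->
  (#|[pred k | tau <= sqrtC (D 0 k)]|)%:R * tau ^+ 2 <= \sum_a \sum_c `|M a c| ^+ 2.
Proof.
move=> t0; rewrite -D_sum mulrC mulr_natr -sumr_const.
apply: (le_trans (y := \sum_(k in [pred k | tau <= sqrtC (D 0 k)]) D 0 k)).
  apply: ler_sum => k; rewrite inE => hk.
  rewrite -(sqrtCK (D 0 k)) ler_pXn2r // nnegrE ?sqrtC_ge0 ?D_ge0 ?ltW //.
rewrite [X in _ <= X](bigID [pred k | tau <= sqrtC (D 0 k)]) /= lerDl.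
by apply: sumr_ge0 => k _; apply: D_ge0.
Qed.

Lemma CB (tau : C) (p : 'rV[C]_n) : 0 < tau ->
  (forall k, tau <= sqrtC (D 0 k) -> p *m (row k S) ^t* = 0) ->
  \sum_a `|p 0 a| ^+ 2 <= 1 ->
  \sum_c `|\sum_a (p 0 a)^* * M a c| ^+ 2 <= tau ^+ 2.
Proof.
move=> t0 hort hp.
have -> : \sum_c `|\sum_a (p 0 a)^* * M a c| ^+ 2 = (p *m G *m p ^t*) 0 0.
  rewrite gram_quad; apply: eq_bigr => c _.
  rewrite -norm_conjC rmorph_sum !mxE; congr (`| _ | ^+ 2); apply: eq_bigr => a _.
  by rewrite rmorphM !mxE /= conjCK.
rewrite quad_spec.
have wk : forall k, (p *m S ^t*) 0 k = (p *m (row k S) ^t*) 0 0.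
  by move=> k; rewrite !mxE; apply: eq_bigr => a _; rewrite !mxE.
apply: (le_trans (y := \sum_k tau ^+ 2 * `|(p *m S ^t*) 0 k| ^+ 2)).
  apply: ler_sum => k _.
  case: (boolP (tau <= sqrtC (D 0 k))) => hk.
    by rewrite wk hort // mxE normr0 expr0n /= !mulr0.
  apply: ler_wpM2r; first by rewrite exprn_ge0.
  have sr : sqrtC (D 0 k) \is Num.real by apply: sqrtC_real; apply: D_ge0.
  have tr : tau \is Num.real by apply: gtr0_real.
  have hlt : sqrtC (D 0 k) < tau by rewrite real_ltNge.
  rewrite -(sqrtCK (D 0 k)) ler_pXn2r ?nnegrE ?sqrtC_ge0 ?D_ge0 ?ltW //.
rewrite -mulr_sumr -dot_self.
have -> : (p *m S ^t*) *m (p *m S ^t*) ^t* = p *m p ^t*.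
  by rewrite trmx_mul map_mxM trmxCK mulmxA -(mulmxA p) StS mulmx1.
rewrite dot_self -[X in _ <= X](mulr1 (tau ^+ 2)).
by rewrite ler_wpM2l // exprn_ge0 // ltW.
Qed.

Lemma rank_bigsum (I : finType) (P : pred I) (A : I -> 'M[C]_n) :
  (\rank (\sum_(i | P i) A i)%MS <= \sum_(i | P i) \rank (A i))%N.
Proof.
apply: (big_ind2 (fun (X : 'M[C]_n) (k : nat) => \rank X <= k)%N).
- by rewrite mxrank0.
- move=> X a Y b hX hY; apply: leq_trans (mxrank_adds_leqif X Y) _.
  exact: leq_add.
- by move=> i _.
Qed.

Lemma L_rank (tau : C) :
  (\rank (left_sv_space M tau) <= #|[pred k | (tau <= sqrtC (D 0 k))%R]|)%N.
Proof.
apply: leq_trans (rank_bigsum _ _) _.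
rewrite -sum1_card; apply: leq_sum => k _.
by rewrite genmxE rank_leq_row.
Qed.

Lemma row_sub_L (tau : C) k : tau <= sqrtC (D 0 k) ->
  (row k S <= left_sv_space M tau)%MS.
Proof.
by move=> hk; apply: (sumsmx_sup k) => //; rewrite genmxE.
Qed.

End Spec.

Section Pair.
Variable C : numClosedFieldType.
Variable n : nat.

Lemma nrm2_conj (x : 'rV[C]_n) : nrm2 (map_mx conjC x) = nrm2 x.
Proof. by apply: eq_bigr => a _; rewrite mxE norm_conjC. Qed.

Lemma nrm2_dot (x : 'rV[C]_n) : nrm2 x = (x *m x ^t*) 0 0.
Proof. by rewrite dot_self. Qed.

Definition Xv (jn : nat) (x : 'rV[C]_n) (l : 'I_(2 * jn)) : 'rV[C]_n :=
  if (l < jn)%N then map_mx conjC x else x.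

Lemma nrm2_Xv jn x l : nrm2 (@Xv jn x l) = nrm2 x.
Proof. by rewrite /Xv; case: ifP => // _; rewrite nrm2_conj. Qed.

Lemma pairing_G jn (Tj : tensor C n (2 * jn)) x :
  pairing Tj x = Gform Tj (@Xv jn x).
Proof.
apply: eq_bigr => idx _; congr (_ * _); apply: eq_bigr => l _.
by rewrite /Xv; case: ifP => _; rewrite ?mxE.
Qed.

Lemma contr_flat k (Tk : tensor C n k) (i : 'I_k) (v : 'rV[C]_n) :
  \sum_r `|@contr C n k Tk i v r| ^+ 2 =
  \sum_c `|\sum_a v 0 a * flattening Tk i a c| ^+ 2.
Proof.
rewrite (sum_rest_enum (fun r => `|@contr C n k Tk i v r| ^+ 2)).
apply: eq_bigr => c _; congr (`| _ | ^+ 2); apply: eq_bigr => a _.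
by rewrite mxE.
Qed.

Lemma pair_diff jn (Tj : tensor C n (2 * jn)) (tau : C) (y z : 'rV[C]_n) :
  0 < tau -> nrm2 y <= 1 -> nrm2 z <= 1 -> nrm2 (y - z) <= 1 ->
  (forall (i : 'I_(2 * jn)) k,
     tau <= sqrtC (spectral_diag (gramT (flattening Tj i)) 0 k) ->
     (y - z) *m (row k (spectralmx (gramT (flattening Tj i)))) ^t* = 0 /\
     map_mx conjC (y - z) *m (row k (spectralmx (gramT (flattening Tj i)))) ^t* = 0) ->
  `|pairing Tj y - pairing Tj z| <= (2 * jn)%:R * tau.
Proof.
move=> t0 hy hz hq hort.
set q := y - z.
pose Vm (m l : 'I_(2 * jn)) := if (l < m)%N then Xv z l
  else if l == m then Xv q l else Xv y l.
have -> : pairing Tj y - pairing Tj z = \sum_(m < 2 * jn) Gform Tj (Vm m).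
  rewrite !pairing_G /Gform -sumrB exchange_big /=; apply: eq_bigr => idx _.
  rewrite -mulrBr telescope_prod mulr_sumr; apply: eq_bigr => m _.
  congr (_ * _); apply: eq_bigr => l _; rewrite /Vm.
  case: ifP => // _; case: ifP => // _.
  by rewrite /Xv /q; case: ifP => _; rewrite !mxE ?rmorphB.
apply: (le_trans (ler_norm_sum _ _ _)).
have -> : (2 * jn)%:R * tau = \sum_(m < 2 * jn) tau.
  by rewrite sumr_const card_ord mulr_natl.
apply: ler_sum => m _.
apply: (KL (i := m)) => //.
  move=> l hl; rewrite /Vm; case: ifP => _; first by rewrite nrm2_Xv.
  by rewrite (negbTE hl) nrm2_Xv.
rewrite /Vm ltnn eqxx contr_flat /Xv.
case: ifP => _.
  under eq_bigr => c _ do under eq_bigr => a _ do rewrite mxE.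
  apply: CB => //; first by move=> k hk; case: (hort m k hk).
have E : forall c, \sum_a q 0 a * flattening Tj m a c =
    \sum_a ((map_mx conjC q) 0 a)^* * flattening Tj m a c.
  by move=> c; apply: eq_bigr => a _; rewrite [in RHS]mxE; congr (_ * _); symmetry; apply: conjCK.
under eq_bigr => c _ do rewrite E.
apply: CB => //; first by move=> k hk; case: (hort m k hk).
by rewrite -/(nrm2 (map_mx conjC q)) nrm2_conj.
Qed.


End Pair.

From mathcomp Require Import ring zify.

Lemma sum2j d : (\sum_(j < d.+1 | (1 <= j)%N) (2 * j) = d * d.+1)%N.
Proof.
rewrite big_mkcond /=; elim: d => [|d IH]; first by rewrite big_ord1.
rewrite big_ord_recr /= IH; nia.
Qed.

Lemma sum4j d : (\sum_(j < d.+1 | (1 <= j)%N) \sum_(i < 2 * j) 2 <= 8 * d.+1 ^ 2)%N.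
Proof.
apply: (leq_trans (n := \sum_(j < d.+1) (4 * d.+1))).
  rewrite big_mkcond /=; apply: leq_sum => j _.
  case: ifP => // _; rewrite sum_nat_const card_ord.
  have := ltn_ord j; nia.
rewrite sum_nat_const card_ord; nia.
Qed.

Section Main.
Variable C : numClosedFieldType.
Variable n : nat.

Lemma ortho_sub (W : 'M[C]_n) p (U : 'M[C]_(p, n)) (y : 'rV[C]_n) : (U <= W)%MS ->
  (y - y *m proj_ortho W) *m U ^t* = 0.
Proof.
move=> hUW; apply/orthomx1P.
apply: submx_trans (proj_ortho_compl_sub W y) _.
by rewrite submx_ortho.
Qed.

Lemma conj_ortho (q : 'rV[C]_n) p (U : 'M[C]_(p, n)) :
  q *m (map_mx conjC U) ^t* = 0 -> map_mx conjC q *m U ^t* = 0.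
Proof.
move=> h.
have -> : map_mx conjC q *m U ^t* = map_mx conjC (q *m (map_mx conjC U) ^t*).
  by rewrite map_mxM map_trmx map_mxCK -map_trmx.
by rewrite h map_mx0.
Qed.

Lemma pyth_gen (a b : 'rV[C]_n) : a *m b ^t* = 0 -> b *m a ^t* = 0 ->
  nrm2 (a + b) = nrm2 a + nrm2 b.
Proof.
move=> hab hba; rewrite !nrm2_dot.
have -> : (a + b) ^t* = a ^t* + b ^t*.
  by apply/matrixP => i j; rewrite !mxE rmorphD.
by rewrite mulmxDr !mulmxDl hab hba addr0 add0r mxE.
Qed.

End Main.

Theorem lemma6p4 (R : realType) (n d : nat) (eps : R[i]) (T0 : R[i])
    (T : forall j : nat, tensor R[i] n (2 * j)) :
  (1 <= d)%N -> 0 < eps ->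
  `|T0| <= 1 -> (forall j : nat, (1 <= j <= d)%N -> frob (T j) <= 1) ->
  let W := Wspace T d (eps / (d.+1)%:R ^+ 2) in
  (\rank W)%:R <= 8 * (d.+1)%:R ^+ 6 / eps ^+ 2 /\
  (forall y : 'rV[R[i]]_n, vnorm y <= 1 ->
     `|fpoly T0 T d y - fpoly T0 T d (y *m proj_ortho W)| <= eps).
Proof.
move=> hd he hT0 hT W.
set tau := eps / (d.+1)%:R ^+ 2.
have dn0 : (d.+1)%:R ^+ 2 != 0 :> R[i] by rewrite expf_neq0 // pnatr_eq0.
have t0 : 0 < tau by rewrite divr_gt0 // exprn_gt0 // ltr0Sn.
have hfrob : forall j : 'I_d.+1, (1 <= j)%N ->
    \sum_(idx : {ffun 'I_(2 * j) -> 'I_n}) `|T j idx| ^+ 2 <= 1.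
  move=> j hj; apply: sqrtC_le1.
    by apply: sumr_ge0 => idx _; rewrite exprn_ge0.
  by apply: hT; rewrite hj -ltnS ltn_ord.
have hflat : forall (j : nat) (i : 'I_(2 * j)),
    \sum_a \sum_c `|flattening (T j) i a c| ^+ 2 =
    \sum_(idx : {ffun 'I_(2 * j) -> 'I_n}) `|T j idx| ^+ 2.
  move=> j i; rewrite (sum_idx_split i); apply: eq_bigr => a _.
  rewrite (sum_rest_enum (fun r => `|T j (insert_idx a r)| ^+ 2)).
  by apply: eq_bigr => c _; rewrite mxE.
have hL : forall j : 'I_d.+1, (1 <= j)%N -> forall i : 'I_(2 * j),
    (\rank (left_sv_space (flattening (T j) i) tau))%:R * tau ^+ 2 <= 1.
  move=> j hj i.
  apply: le_trans (hfrob j hj); rewrite -(hflat j i).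
  apply: le_trans (count_bound _ t0).
  apply: ler_wpM2r; first by rewrite exprn_ge0 // ltW.
  by rewrite ler_nat L_rank.
have hsub : forall j : 'I_d.+1, (1 <= j)%N -> forall i : 'I_(2 * j),
    (left_sv_space (flattening (T j) i) tau <= W)%MS /\
    (conj_space (left_sv_space (flattening (T j) i) tau) <= W)%MS.
  move=> j hj i; split; apply: (sumsmx_sup j) => //; apply: (sumsmx_sup i) => //.
    exact: addsmxSl.
  exact: addsmxSr.
split.
  have rkW : (\rank W <= \sum_(j < d.+1 | (1 <= j)%N) \sum_(i < 2 * j)
        (\rank (left_sv_space (flattening (T j) i) tau)) * 2)%N.
    apply: leq_trans (rank_bigsum _ _) _; apply: leq_sum => j hj.
    apply: leq_trans (rank_bigsum _ _) _; apply: leq_sum => i _.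
    apply: leq_trans (mxrank_adds_leqif _ _) _.
    by rewrite /conj_space mxrank_map muln2 -addnn.
  have h1 : (\rank W)%:R * tau ^+ 2 <= (8 * d.+1 ^ 2)%:R :> R[i].
    apply: (le_trans (y := (\sum_(j < d.+1 | (1 <= j)%N) \sum_(i < 2 * j)
        (\rank (left_sv_space (flattening (T j) i) tau)) * 2)%:R * tau ^+ 2)).
      by apply: ler_wpM2r; [rewrite exprn_ge0 // ltW | rewrite ler_nat].
    apply: le_trans (_ : (\sum_(j < d.+1 | (1 <= j)%N) \sum_(i < 2 * j) 2)%:R <= _);
      last by rewrite ler_nat sum4j.
    rewrite !natr_sum mulr_suml; apply: ler_sum => j hj.
    rewrite !natr_sum mulr_suml; apply: ler_sum => i _.
    rewrite natrM mulrAC -[X in _ <= X]mul1r ler_wpM2r //.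
    exact: hL.
  rewrite -ler_pdivlMr ?exprn_gt0 // in h1.
  apply: le_trans h1 _; rewrite le_eqVlt; apply/orP; left; apply/eqP.
  rewrite /tau natrM natrX; field.
  by rewrite (gt_eqF he) /= addrC natr1 pnatr_eq0.
move=> y hy.
set z := y *m proj_ortho W.
have hyn : nrm2 y <= 1.
  by apply: sqrtC_le1; [apply: nrm2_ge0 | exact: hy].
have ortho : forall p (U : 'M_(p, n)), (U <= W)%MS -> (y - z) *m U ^t* = 0.
  by move=> p U hU; apply: ortho_sub.
have zW : (z <= W)%MS by apply: proj_ortho_sub.
have pyth : nrm2 y = nrm2 z + nrm2 (y - z).
  have h1 : (y - z) *m z ^t* = 0 by apply: ortho.
  have h2 : z *m (y - z) ^t* = 0.
    have -> : z *m (y - z) ^t* = ((y - z) *m z ^t*) ^t*.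
      by rewrite trmx_mul map_mxM trmxCK.
    by rewrite h1 trmx0 map_mx0.
  by rewrite -pyth_gen // addrC subrK.
have hzn : nrm2 z <= 1.
  by apply: le_trans hyn; rewrite pyth lerDl nrm2_ge0.
have hqn : nrm2 (y - z) <= 1.
  by apply: le_trans hyn; rewrite pyth lerDr nrm2_ge0.
rewrite /fpoly opprD addrACA subrr add0r -sumrB.
apply: (le_trans (ler_norm_sum _ _ _)).
apply: (le_trans (y := \sum_(j < d.+1 | (1 <= j)%N) (2 * j)%:R * tau)).
  apply: ler_sum => j hj.
  apply: pair_diff => // i k hk.
  have hrow := row_sub_L hk.
  have [hs1 hs2] := hsub j hj i.
  split; first by apply: ortho; apply: submx_trans hrow hs1.
  apply: conj_ortho; apply: ortho; apply: submx_trans _ hs2.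
  by rewrite /conj_space map_submx.
rewrite -mulr_suml -natr_sum sum2j.
rewrite -[X in _ <= X](divfK dn0) -/tau mulrC.
apply: ler_wpM2l; first exact: ltW.
by rewrite -natrX ler_nat expnS expn1 leq_mul2r leqnSn orbT.
Qed.
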